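(* Let $T$ be a Skolem-free theory. If every model $M$ of $T+\mathrm{IND}(L(T))$ has definable Skolem functions, then \[ \mathrm{SA}_{L(T)} + T + \mathrm{IND}(\mathit{sk}^\omega(L(T))) \equiv_{L(T)} T + \mathrm{IND}(L(T)). \]
   Context: Skolem symbols: $\mathfrak{s}_{Qx\varphi}$ ($Q\in\{\forall,\exists\}$) is a new function symbol of arity $|\mathrm{FV}(Qx\varphi)|$ for each formula $Qx\varphi$; $\mathit{sk}^\omega(L)$ is the closure of $L$ under adding these; $L$ (or a theory over $L$) is Skolem-free if $L$ contains none of these symbols. $\mathrm{SA}_L$: universal closures of $\exists x\varphi(x,\vec y)\to\varphi(\mathfrak{s}_{\exists x\varphi}(\vec y),\vec y)$ and $\varphi(\mathfrak{s}_{\forall x\varphi}(\vec y),\vec y)\to\forall x\varphi(x,\vec y)$ for all $\mathit{sk}^\omega(L)$ formulas $\varphi$. $I_x\varphi=\forall\vec z(\varphi(0,\vec z)\wedge\forall x(\varphi(x,\vec z)\to\varphi(s(x),\vec z))\to\forall x\varphi(x,\vec z))$ and $\mathrm{IND}(L')$ is the set of $I_x\varphi$ for all $L'$ formulas $\varphi$. $T_1\equiv_L T_2$ means $T_1$ and $T_2$ prove the same $L$ formulas. For a Skolem-free language $L$ and $L$-structure $M$, a function $f:M^k\to M$ is $L$-definable in $M$ if there is an $L$ formula $\varphi(\vec x,y)$ with $f(\vec d)=b\iff M\models\varphi(\vec d,b)$ for all $\vec d$; $M$ has definable Skolem functions if for every $L$ formula $\varphi(\vec x,y)$ with $\vec x=(x_1,\dots,x_k)$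 there is an $L$-definable $f:M^k\to M$ with $M\models\exists y\varphi(\vec d,y)\to\varphi(\vec d,f(\vec d))$ for all $\vec d\in M^k$. *)

(* Defs.v *)
From Stdlib Require Import List Arith PeanoNat.
Import ListNotations.

(* Base function symbols [FBase n k] have name n and arity k.
   [Sk q phi] is the Skolem symbol  s_{Q x phi}  where  Q = exists if
   q = true and Q = forall if q = false, and [phi] is the body of the
   quantified formula (de Bruijn index 0 is the bound variable x).     *)
Inductive term : Type :=
| Var : nat -> term
| App : fsym -> list term -> term
with fsym : Type :=
| FBase : nat -> nat -> fsym
| Sk : bool -> formula -> fsym
with formula : Type :=
| Fal : formula
| Eq : term -> term -> formula
| Pred : psym -> list term -> formula
| Imp : formula -> formula -> formula
| And : formula -> formula -> formula
| Or : formula -> formula -> formula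
| All : formula -> formula
| Ex : formula -> formula
with psym : Type :=
| PBase : nat -> nat -> psym.

Definition Neg (f : formula) : formula := Imp f Fal.

Definition quant (q : bool) (phi : formula) : formula :=
  if q then Ex phi else All phi.

Definition zero_sym : fsym := FBase 0 0.
Definition succ_sym : fsym := FBase 1 1.
Definition tzero : term := App zero_sym [].
Definition tsucc (t : term) : term := App succ_sym [t].

Fixpoint tfree (i : nat) (t : term) : bool :=
  match t with
  | Var n => Nat.eqb n i
  | App _ ts => existsb (tfree i) ts
  end.

Fixpoint ffree (i : nat) (f : formula) : bool :=
  match f with
  | Fal => false
  | Eq t u => tfree i t || tfree i u
  | Pred _ ts => existsb (tfree i) ts
  | Imp a b | And a b | Or a b => ffree i a || ffree i b
  | All a | Ex a => ffree (S i) a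
  end.

(* an upper bound (1 + largest free index) for the free variables *)
Fixpoint tbound (t : term) : nat :=
  match t with
  | Var n => S n
  | App _ ts => fold_right (fun u m => Nat.max (tbound u) m) 0 ts
  end.

Fixpoint fbound (f : formula) : nat :=
  match f with
  | Fal => 0
  | Eq t u => Nat.max (tbound t) (tbound u)
  | Pred _ ts => fold_right (fun u m => Nat.max (tbound u) m) 0 ts
  | Imp a b | And a b | Or a b => Nat.max (fbound a) (fbound b)
  | All a | Ex a => Nat.pred (fbound a)
  end.

Definition fvlist (f : formula) : list nat :=
  filter (fun i => ffree i f) (seq 0 (fbound f)).

Definition sentence (f : formula) : Prop := fbound f = 0.

Fixpoint alln (n : nat) (f : formula) : formula :=
  match n with 0 => f | S n => All (alln n f) end.
Definition uclose (f : formula) : formula := alln (fbound f) f.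

Definition farity (g : fsym) : nat :=
  match g with
  | FBase _ k => k
  | Sk q phi => length (fvlist (quant q phi))
  end.
Definition parity (p : psym) : nat := match p with PBase _ k => k end.

Fixpoint trename (r : nat -> nat) (t : term) : term :=
  match t with
  | Var n => Var (r n)
  | App g ts => App g (map (trename r) ts)
  end.

Definition up (s : nat -> term) : nat -> term :=
  fun n => match n with 0 => Var 0 | S m => trename S (s m) end.

Fixpoint tsubst (s : nat -> term) (t : term) : term :=
  match t with
  | Var n => s n
  | App g ts => App g (map (tsubst s) ts)
  end.

Fixpoint fsubst (s : nat -> term) (f : formula) : formula :=
  match f with
  | Fal => Fal
  | Eq t u => Eq (tsubst s t) (tsubst s u)
  | Pred p ts => Pred p (map (tsubst s) ts)
  | Imp a b => Imp (fsubst s a) (fsubst s b)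
  | And a b => And (fsubst s a) (fsubst s b)
  | Or a b => Or (fsubst s a) (fsubst s b)
  | All a => All (fsubst (up s) a)
  | Ex a => Ex (fsubst (up s) a)
  end.

Definition inst0 (t : term) : nat -> term :=
  fun n => match n with 0 => t | S m => Var m end.

Record language : Type := Lang {
  lfun : fsym -> Prop;
  lpred : psym -> Prop }.

Fixpoint wf_term (L : language) (t : term) : Prop :=
  match t with
  | Var _ => True
  | App g ts => lfun L g /\ length ts = farity g /\
                (fix wfl (us : list term) : Prop :=
                   match us with [] => True | u :: us => wf_term L u /\ wfl us end) ts
  end.

Fixpoint wf_formula (L : language) (f : formula) : Prop :=
  match f with
  | Fal => True
  | Eq t u => wf_term L t /\ wf_term L u
  | Pred p ts => lpred L p /\ length ts = parity p /\ Forall (wf_term L) ts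
  | Imp a b | And a b | Or a b => wf_formula L a /\ wf_formula L b
  | All a | Ex a => wf_formula L a
  end.

Definition skolem_free (L : language) : Prop :=
  forall g, lfun L g -> exists n k, g = FBase n k.

Fixpoint skn (n : nat) (L : language) : language :=
  match n with
  | 0 => L
  | S m => Lang (fun g => lfun (skn m L) g \/
                   exists q phi, g = Sk q phi /\ wf_formula (skn m L) phi)
                (lpred L)
  end.

Definition skw (L : language) : language :=
  Lang (fun g => exists n, lfun (skn n L) g) (lpred L).

Definition skterm (q : bool) (phi : formula) : term :=
  App (Sk q phi) (map Var (fvlist (quant q phi))).

Definition SA_ex (phi : formula) : formula :=
  uclose (Imp (Ex phi) (fsubst (inst0 (skterm true phi)) phi)).
Definition SA_all (phi : formula) : formula :=
  uclose (Imp (fsubst (inst0 (skterm false phi)) phi) (All phi)).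

Definition SA (L : language) (f : formula) : Prop :=
  exists phi, wf_formula (skw L) phi /\ (f = SA_ex phi \/ f = SA_all phi).

(* Induction axiom I_x phi, x = index 0, parameters z = the other indices. *)
Definition Ind (phi : formula) : formula :=
  uclose (Imp (And (fsubst (inst0 tzero) phi)
                   (All (Imp phi (fsubst (fun n => match n with
                                                   | 0 => tsucc (Var 0)
                                                   | S m => Var (S m) end) phi))))
              (All phi)).

Definition IND (L : language) (f : formula) : Prop :=
  exists phi, wf_formula L phi /\ f = Ind phi.

(* Semantics.  A structure interprets every symbol of the universal
   vocabulary; only the symbols of the relevant language matter. *)
Record structure : Type := Struct {
  dom :> Type;
  dom_inh : dom;
  ifun : fsym -> list dom -> dom;
  ipred : psym -> list dom -> Prop }.

Fixpoint teval (M : structure) (rho : nat -> M) (t : term) : M :=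
  match t with
  | Var n => rho n
  | App g ts => ifun M g (map (teval M rho) ts)
  end.

Definition scons {D : Type} (d : D) (rho : nat -> D) : nat -> D :=
  fun n => match n with 0 => d | S m => rho m end.

Fixpoint sat (M : structure) (rho : nat -> M) (f : formula) : Prop :=
  match f with
  | Fal => False
  | Eq t u => teval M rho t = teval M rho u
  | Pred p ts => ipred M p (map (teval M rho) ts)
  | Imp a b => sat M rho a -> sat M rho b
  | And a b => sat M rho a /\ sat M rho b
  | Or a b => sat M rho a \/ sat M rho b
  | All a => forall d : M, sat M (scons d rho) a
  | Ex a => exists d : M, sat M (scons d rho) a
  end.

Definition valid_in (M : structure) (f : formula) : Prop :=
  forall rho, sat M rho f.

Definition model_of (M : structure) (Th : formula -> Prop) : Prop :=
  forall f, Th f -> valid_in M f.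

Definition theory_union (A B : formula -> Prop) : formula -> Prop :=
  fun f => A f \/ B f.

(* consequence: Th proves f (semantic rendering) *)
Definition proves (Th : formula -> Prop) (f : formula) : Prop :=
  forall M : structure, model_of M Th -> valid_in M f.

Definition equiv_on (L : language) (T1 T2 : formula -> Prop) : Prop :=
  forall f, wf_formula L f -> (proves T1 f <-> proves T2 f).

(* environment from a list: index i |-> i-th element (default beyond) *)
Definition env (M : structure) (l : list M) : nat -> M :=
  fun i => nth i l (dom_inh M).

(* f : M^k -> M (represented on lists of length k) is L-definable in M *)
Definition definable (L : language) (M : structure) (k : nat)
    (fn : list M -> M) : Prop :=
  exists psi, wf_formula L psi /\ fbound psi <= S k /\
    forall (d : list M) (b : M), length d = k ->
      (fn d = b <-> sat M (env M (b :: d)) psi).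

(* definable Skolem functions: for phi(x_1..x_k, y) with y = index 0
   and x_i = index i. *)
Definition has_definable_skolem_functions (L : language) (M : structure) : Prop :=
  forall (k : nat) (phi : formula), wf_formula L phi -> fbound phi <= S k ->
    exists fn : list M -> M, definable L M k fn /\
      forall d : list M, length d = k ->
        sat M (env M d) (Ex phi) -> sat M (env M (fn d :: d)) phi.

Definition theory_over (L : language) (T : formula -> Prop) : Prop :=
  forall f, T f -> wf_formula L f /\ sentence f.

(* Main.v *)
Require Import Defs.
From Stdlib Require Import Bool List Arith PeanoNat Lia FunctionalExtensionality Classical ClassicalEpsilon PropExtensionality.
Import ListNotations.

Fixpoint term_ind' (P : term -> Prop) (Hv : forall n, P (Var n))
  (Ha : forall g ts, Forall P ts -> P (App g ts)) (t : term) : P t :=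
  match t with
  | Var n => Hv n
  | App g ts => Ha g ts ((fix aux (l : list term) : Forall P l :=
        match l with [] => Forall_nil _ | u :: us => Forall_cons _ (term_ind' P Hv Ha u) (aux us) end) ts)
  end.

Lemma wf_app L g ts : wf_term L (App g ts) <-> lfun L g /\ length ts = farity g /\ Forall (wf_term L) ts.
Proof.
  simpl. assert (H : forall us, (fix wfl (us : list term) : Prop :=
                   match us with [] => True | u :: us => wf_term L u /\ wfl us end) us <-> Forall (wf_term L) us).
  { induction us; split; intros; auto; [destruct H; constructor; tauto | inversion H; subst; split; tauto]. }
  rewrite H. tauto.
Qed.

Lemma teval_rename M rho r t : teval M rho (trename r t) = teval M (fun i => rho (r i)) t.
Proof.
  induction t using term_ind'; simpl; auto.
  f_equal. rewrite map_map. induction H; simpl; auto. rewrite H, IHForall; auto.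
Qed.

Lemma teval_subst M rho s t : teval M rho (tsubst s t) = teval M (fun i => teval M rho (s i)) t.
Proof.
  induction t using term_ind'; simpl; auto.
  f_equal. rewrite map_map. induction H; simpl; auto. rewrite H, IHForall; auto.
Qed.

Lemma sat_subst M f : forall s rho, sat M rho (fsubst s f) <-> sat M (fun i => teval M rho (s i)) f.
Proof.
  induction f; intros s rho; simpl.
  - tauto.
  - rewrite !teval_subst. tauto.
  - rewrite map_map. erewrite map_ext; [reflexivity|]. intros; apply teval_subst.
  - rewrite IHf1, IHf2; tauto.
  - rewrite IHf1, IHf2; tauto.
  - rewrite IHf1, IHf2; tauto.
  - split; intros H d; specialize (H d); rewrite IHf in *;
    (replace (fun i => teval M (scons d rho) (up s i)) with (scons d (fun i => teval M rho (s i))) in * ;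
     [auto| extensionality i; destruct i; simpl; auto; rewrite teval_rename; reflexivity]).
  - split; intros [d H]; exists d; rewrite IHf in *;
    (replace (fun i => teval M (scons d rho) (up s i)) with (scons d (fun i => teval M rho (s i))) in * ;
     [auto| extensionality i; destruct i; simpl; auto; rewrite teval_rename; reflexivity]).
Qed.

Lemma teval_coinc M t rho1 rho2 : (forall i, tfree i t = true -> rho1 i = rho2 i) -> teval M rho1 t = teval M rho2 t.
Proof.
  induction t using term_ind'; simpl; intros Hr.
  - apply Hr. apply Nat.eqb_refl.
  - f_equal. induction H; simpl in *; auto. f_equal.
    + apply H. intros i Hi; apply Hr; rewrite Hi; auto.
    + apply IHForall. intros i Hi; apply Hr; rewrite Hi, orb_true_r; auto.
Qed.

Lemma sat_coinc M f : forall rho1 rho2, (forall i, ffree i f = true -> rho1 i = rho2 i) -> (sat M rho1 f <-> sat M rho2 f).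
Proof.
  induction f; intros rho1 rho2 Hr; simpl in *.
  - tauto.
  - rewrite (teval_coinc M t rho1 rho2), (teval_coinc M t0 rho1 rho2); [tauto| |];
    intros i Hi; apply Hr; rewrite Hi; auto using orb_true_r.
  - replace (map (teval M rho1) l) with (map (teval M rho2) l); [tauto|].
    induction l; simpl in *; auto. f_equal.
    + symmetry; apply teval_coinc. intros i Hi; apply Hr; rewrite Hi; auto.
    + apply IHl. intros i Hi; apply Hr; rewrite Hi, orb_true_r; auto.
  - rewrite (IHf1 rho1 rho2), (IHf2 rho1 rho2); [tauto| |]; intros i Hi; apply Hr; rewrite Hi; auto using orb_true_r.
  - rewrite (IHf1 rho1 rho2), (IHf2 rho1 rho2); [tauto| |]; intros i Hi; apply Hr; rewrite Hi; auto using orb_true_r.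
  - rewrite (IHf1 rho1 rho2), (IHf2 rho1 rho2); [tauto| |]; intros i Hi; apply Hr; rewrite Hi; auto using orb_true_r.
  - split; intros H d; specialize (H d); [rewrite <- (IHf (scons d rho1))|rewrite (IHf (scons d rho1))]; eauto;
    intros [|i] Hi; simpl; auto.
  - split; intros [d H]; exists d; [rewrite <- (IHf (scons d rho1))|rewrite (IHf (scons d rho1))]; eauto;
    intros [|i] Hi; simpl; auto.
Qed.

Definition fmax (ts : list term) := fold_right (fun u m => Nat.max (tbound u) m) 0 ts.

Lemma fmax_in u ts : In u ts -> tbound u <= fold_right (fun u m => Nat.max (tbound u) m) 0 ts.
Proof. induction ts; simpl; [tauto|]. intros [->|H]; [lia|]. specialize (IHts H); lia. Qed.

Lemma tfree_lt t i : tfree i t = true -> i < tbound t.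
Proof.
  induction t using term_ind'; simpl; intros Hi.
  - apply Nat.eqb_eq in Hi; lia.
  - induction H; simpl in *; [discriminate|].
    apply orb_true_iff in Hi as [Hi|Hi]; [specialize (H Hi); lia| specialize (IHForall Hi); lia].
Qed.

Lemma ffree_lt f : forall i, ffree i f = true -> i < fbound f.
Proof.
  induction f; simpl; intros i Hi; try discriminate;
   try (apply orb_true_iff in Hi as [Hi|Hi]; [apply IHf1 in Hi| apply IHf2 in Hi]; lia).
  - apply orb_true_iff in Hi as [Hi|Hi]; apply tfree_lt in Hi; lia.
  - induction l; simpl in *; [discriminate|].
    apply orb_true_iff in Hi as [Hi|Hi]; [apply tfree_lt in Hi; lia| specialize (IHl Hi); lia].
  - apply IHf in Hi; lia.
  - apply IHf in Hi; lia.
Qed.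

Lemma sat_coinc_bound M f rho1 rho2 : (forall i, i < fbound f -> rho1 i = rho2 i) -> (sat M rho1 f <-> sat M rho2 f).
Proof. intros H; apply sat_coinc; intros i Hi; apply H, ffree_lt, Hi. Qed.

Lemma tbound_rename_S t : tbound (trename S t) <= S (tbound t).
Proof.
  induction t using term_ind'; simpl; auto.
  induction H; simpl; lia.
Qed.

Lemma tbound_subst s m t : (forall j, tbound (s j) <= m) -> tbound (tsubst s t) <= m.
Proof.
  intros Hs; induction t using term_ind'; simpl; auto.
  induction H; simpl; lia.
Qed.

Lemma fbound_subst f : forall s m, (forall j, tbound (s j) <= m) -> fbound (fsubst s f) <= m.
Proof.
  induction f; intros s m Hs; simpl; try lia;
   try (specialize (IHf1 s m Hs); specialize (IHf2 s m Hs); lia).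
  - pose proof (tbound_subst s m t Hs); pose proof (tbound_subst s m t0 Hs); lia.
  - induction l; simpl; try lia. pose proof (tbound_subst s m a Hs); lia.
  - assert (fbound (fsubst (up s) f) <= S m); [|lia].
    apply IHf. intros [|j]; simpl; [lia|]. pose proof (tbound_rename_S (s j)); specialize (Hs j); lia.
  - assert (fbound (fsubst (up s) f) <= S m); [|lia].
    apply IHf. intros [|j]; simpl; [lia|]. pose proof (tbound_rename_S (s j)); specialize (Hs j); lia.
Qed.

Lemma wf_term_mono (L1 L2 : language) : (forall g, lfun L1 g -> lfun L2 g) -> forall t, wf_term L1 t -> wf_term L2 t.
Proof.
  intros Hg t; induction t using term_ind'; [simpl; auto|].
  rewrite !wf_app. intros (H1 & H2 & H3). repeat split; auto.
  clear H1 H2; induction H; inversion H3; subst; constructor; auto.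
Qed.

Lemma wf_mono (L1 L2 : language) : (forall g, lfun L1 g -> lfun L2 g) -> (forall p, lpred L1 p -> lpred L2 p) ->
  forall f, wf_formula L1 f -> wf_formula L2 f.
Proof.
  intros Hg Hp f; induction f; simpl; try tauto.
  - intros [? ?]; split; eapply wf_term_mono; eauto.
  - intros (? & ? & H); repeat split; auto. eapply Forall_impl; [|exact H]. apply wf_term_mono; auto.
Qed.

Lemma wf_rename L r t : wf_term L t -> wf_term L (trename r t).
Proof.
  induction t using term_ind'; [simpl; auto|].
  intros Hw; change (wf_term L (App g (map (trename r) ts))); revert Hw.
  rewrite !wf_app. intros (H1 & H2 & H3). rewrite length_map. repeat split; auto.
  clear H1 H2; induction H; inversion H3; subst; constructor; auto.
Qed.

Lemma wf_tsubst L s t : (forall j, wf_term L (s j)) -> wf_term L t -> wf_term L (tsubst s t).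
Proof.
  intros Hs; induction t using term_ind'; [simpl; auto|].
  intros Hw; change (wf_term L (App g (map (tsubst s) ts))); revert Hw.
  rewrite !wf_app. intros (H1 & H2 & H3). rewrite length_map. repeat split; auto.
  clear H1 H2; induction H; inversion H3; subst; constructor; auto.
Qed.

Lemma wf_fsubst L f : forall s, (forall j, wf_term L (s j)) -> wf_formula L f -> wf_formula L (fsubst s f).
Proof.
  induction f; intros s Hs; simpl; try tauto.
  - intros [? ?]; split; apply wf_tsubst; auto.
  - intros (? & Hl & H); rewrite length_map; repeat split; auto.
    clear Hl; induction H; simpl; constructor; auto using wf_tsubst.
  - intros [? ?]; split; auto.
  - intros [? ?]; split; auto.
  - intros [? ?]; split; auto.
  - apply IHf. intros [|j]; simpl; auto using wf_rename.
  - apply IHf. intros [|j]; simpl; auto using wf_rename.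
Qed.

Lemma alln_valid M f n : (forall rho, sat M rho f) -> forall rho, sat M rho (alln n f).
Proof. induction n; simpl; auto. Qed.

Lemma alln_inv M f n : forall rho, sat M (fun i => rho (n + i)) (alln n f) -> sat M rho f.
Proof.
  induction n; intros rho H; simpl in *; auto.
  apply IHn. specialize (H (rho n)).
  replace (fun i => rho (n + i)) with (scons (rho n) (fun i => rho (S (n + i)))); auto.
  extensionality i; destruct i; simpl; f_equal; lia.
Qed.

Lemma uclose_valid M f : valid_in M (uclose f) <-> valid_in M f.
Proof.
  unfold valid_in, uclose; split; intros H rho.
  - apply (alln_inv M f (fbound f)); auto.
  - apply alln_valid; auto.
Qed.

Definition mk (M : structure) (F : fsym -> list M -> M) : structure := Struct M (dom_inh M) F (ipred M).

Lemma teval_agree M L0 F1 F2 : (forall g, lfun L0 g -> F1 g = F2 g) ->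
  forall t, wf_term L0 t -> forall rho, teval (mk M F1) rho t = teval (mk M F2) rho t.
Proof.
  intros HF t; induction t using term_ind'; [simpl; auto|].
  rewrite wf_app; intros (H1 & _ & H3) rho; simpl. rewrite HF; auto. f_equal.
  induction H; inversion H3; subst; simpl; auto. f_equal; auto.
Qed.

Lemma sat_agree M L0 F1 F2 : (forall g, lfun L0 g -> F1 g = F2 g) ->
  forall f, wf_formula L0 f -> forall rho, sat (mk M F1) rho f <-> sat (mk M F2) rho f.
Proof.
  intros HF f; induction f; simpl; intros Hw rho; try tauto.
  - destruct Hw. rewrite (teval_agree M L0 F1 F2 HF t), (teval_agree M L0 F1 F2 HF t0); auto; tauto.
  - destruct Hw as (_ & _ & H). match goal with |- ipred _ _ ?a <-> ipred _ _ ?b => replace a with b; [reflexivity|] end.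
    induction H; simpl; auto. f_equal; auto. symmetry; apply (teval_agree M L0 F1 F2 HF); auto.
  - destruct Hw. rewrite IHf1, IHf2; tauto.
  - destruct Hw. rewrite IHf1, IHf2; tauto.
  - destruct Hw. rewrite IHf1, IHf2; tauto.
  - split; intros H d; specialize (H d); apply IHf; auto; apply IHf; auto.
  - split; intros [d H]; exists d; apply IHf; auto; apply IHf; auto.
Qed.

Definition DefR (L : language) (M : structure) (R : (nat -> M) -> Prop) : Prop :=
  exists psi, wf_formula L psi /\ forall rho, R rho <-> sat (mk M (ifun M)) rho psi.


Lemma DefR_ext L (M : structure) (R1 R2 : (nat -> M) -> Prop) : (forall rho, R1 rho <-> R2 rho) -> DefR L M R1 -> DefR L M R2.
Proof. intros H [psi [Hw Hp]]; exists psi; split; auto. intros rho; rewrite <- H; auto. Qed.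

Lemma DefR_and L M R1 R2 : DefR L M R1 -> DefR L M R2 -> DefR L M (fun rho => R1 rho /\ R2 rho).
Proof. intros [p1 [w1 h1]] [p2 [w2 h2]]; exists (And p1 p2); split; [simpl; auto|]. intros rho; simpl; rewrite h1, h2; tauto. Qed.
Lemma DefR_or L M R1 R2 : DefR L M R1 -> DefR L M R2 -> DefR L M (fun rho => R1 rho \/ R2 rho).
Proof. intros [p1 [w1 h1]] [p2 [w2 h2]]; exists (Or p1 p2); split; [simpl; auto|]. intros rho; simpl; rewrite h1, h2; tauto. Qed.
Lemma DefR_imp L M R1 R2 : DefR L M R1 -> DefR L M R2 -> DefR L M (fun rho => R1 rho -> R2 rho).
Proof. intros [p1 [w1 h1]] [p2 [w2 h2]]; exists (Imp p1 p2); split; [simpl; auto|]. intros rho; simpl; rewrite h1, h2; tauto. Qed.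
Lemma DefR_false L M : DefR L M (fun _ => False).
Proof. exists Fal; split; [exact I| intros; simpl; tauto]. Qed.
Lemma DefR_all L M R : DefR L M R -> DefR L M (fun rho => forall d, R (scons d rho)).
Proof. intros [p [w h]]; exists (All p); split; [simpl; auto|]. intros rho; simpl; split; intros H d; apply h; auto. Qed.
Lemma DefR_ex L M R : DefR L M R -> DefR L M (fun rho => exists d, R (scons d rho)).
Proof. intros [p [w h]]; exists (Ex p); split; [simpl; auto|]. intros rho; simpl; split; intros [d H]; exists d; apply h; auto. Qed.
Lemma DefR_ren L M R r : DefR L M R -> DefR L M (fun rho => R (fun i => rho (r i))).
Proof.
  intros [p [w h]]; exists (fsubst (fun i => Var (r i)) p); split.
  - apply wf_fsubst; simpl; auto.
  - intros rho; rewrite sat_subst; simpl; apply h.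
Qed.
Lemma DefR_eqv L M i j : DefR L M (fun rho => rho i = rho j).
Proof. exists (Eq (Var i) (Var j)); split; [simpl; auto| intros; simpl; tauto]. Qed.

Lemma map_var_seq N rho k : map (teval N rho) (map Var (seq 0 k)) = map rho (seq 0 k).
Proof. rewrite map_map; reflexivity. Qed.

Lemma Forall_wf_vars L k : Forall (wf_term L) (map Var (seq 0 k)).
Proof. rewrite Forall_map. apply Forall_forall; simpl; auto. Qed.

Lemma DefR_fun L M g : lfun L g -> DefR L M (fun rho => rho (farity g) = ifun M g (map rho (seq 0 (farity g)))).
Proof.
  intros Hg; exists (Eq (Var (farity g)) (App g (map Var (seq 0 (farity g))))); split.
  - split; [simpl; auto|]. apply wf_app. rewrite length_map, length_seq. repeat split; auto using Forall_wf_vars.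
  - intros rho. simpl. rewrite map_map. tauto.
Qed.

Lemma DefR_pred L M p : lpred L p -> DefR L M (fun rho => ipred M p (map rho (seq 0 (parity p)))).
Proof.
  intros Hp; exists (Pred p (map Var (seq 0 (parity p)))); split.
  - split; [auto|]. rewrite length_map, length_seq. split; auto using Forall_wf_vars.
  - intros rho. simpl. rewrite map_map. tauto.
Qed.

Definition Gr (M : structure) F (t : term) : (nat -> M) -> Prop :=
  fun rho => rho 0 = teval (mk M F) (fun i => rho (S i)) t.

Lemma map_scons_seq {D} (b : D) rho a n : map (scons b rho) (seq (S a) n) = map rho (seq a n).
Proof. revert a; induction n; intros a; simpl; auto. f_equal; auto. Qed.

Lemma list_lemma L M F (r : nat -> nat) ts : Forall (fun t => DefR L M (Gr M F t)) ts ->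
  forall Q : list M -> (nat -> M) -> Prop,
  DefR L M (fun rho => Q (map rho (seq 0 (length ts))) (fun i => rho (length ts + i))) ->
  DefR L M (fun rho => Q (map (teval (mk M F) (fun i => rho (r i))) ts) rho).
Proof.
  induction 1 as [|t ts Ht Hts IH]; intros Q HQ.
  - exact HQ.
  - set (n' := length ts) in *.
    apply (IH (fun vs rho => Q (teval (mk M F) (fun i => rho (r i)) t :: vs) rho)).
    simpl.
    pose proof (DefR_ren L M _ (fun j => match j with 0 => 0 | S i => S (n' + r i) end) Ht) as G'.
    pose proof (DefR_ex L M _ (DefR_and L M _ _ G' HQ)) as E.
    revert E; apply DefR_ext. intros rho; unfold Gr; simpl.
    unfold n'. split.
    + intros [b [-> H]]. rewrite map_scons_seq in H. exact H.
    + intros H. eexists; split; [reflexivity|]. rewrite map_scons_seq. exact H.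
Qed.

Definition SymDef L M F g := DefR L M (fun rho => rho (farity g) = F g (map rho (seq 0 (farity g)))).

Lemma formula_def L M L0 F : (forall p, lpred L0 p -> lpred L p) -> (forall g, lfun L0 g -> SymDef L M F g) ->
  (forall t, wf_term L0 t -> DefR L M (Gr M F t)) /\
  (forall f, wf_formula L0 f -> DefR L M (fun rho => sat (mk M F) rho f)).
Proof.
  intros Hp Hg.
  assert (HT : forall t, wf_term L0 t -> DefR L M (Gr M F t)).
  { intros t; induction t using term_ind'.
    - intros _; apply DefR_eqv.
    - rewrite wf_app; intros (H1 & H2 & H3).
      assert (Hf : Forall (fun t => DefR L M (Gr M F t)) ts).
      { clear H1 H2; induction H; inversion H3; subst; constructor; auto. }
      pose proof (list_lemma L M F S ts Hf (fun vs rho => rho 0 = F g vs)) as LL.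
      unfold Gr; simpl. apply LL.
      specialize (Hg g H1); unfold SymDef in Hg. rewrite <- H2 in Hg.
      revert Hg; apply DefR_ext; intros rho. rewrite Nat.add_0_r. tauto. }
  split; auto.
  intros f; induction f; simpl; intros Hw.
  - apply DefR_false.
  - destruct Hw as [w1 w2].
    pose proof (DefR_ex L M _ (DefR_and L M _ _ (HT t w1) (HT t0 w2))) as E.
    revert E; apply DefR_ext; intros rho; unfold Gr; simpl. split.
    + intros [b [H1 H2]]; exact (eq_trans (eq_sym H1) H2).
    + intros H; eexists; split; [reflexivity|exact H].
  - destruct Hw as (Hpp & Hl & Hf).
    assert (Hf' : Forall (fun t => DefR L M (Gr M F t)) l).
    { clear Hl; induction Hf; constructor; auto. }
    apply (list_lemma L M F (fun i => i) l Hf' (fun vs rho => ipred M p vs)).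
    rewrite Hl. apply DefR_pred; auto.
  - destruct Hw; apply DefR_imp; auto.
  - destruct Hw; apply DefR_and; auto.
  - destruct Hw; apply DefR_or; auto.
  - exact (DefR_all L M (fun rho => sat (mk M F) rho f) (IHf Hw)).
  - exact (DefR_ex L M (fun rho => sat (mk M F) rho f) (IHf Hw)).
Qed.

Fixpoint idx (i : nat) (l : list nat) : nat :=
  match l with [] => 0 | x :: l' => if Nat.eqb x i then 0 else S (idx i l') end.

Lemma nth_idx_map {D} (rho : nat -> D) z i l : In i l -> nth (idx i l) (map rho l) z = rho i.
Proof.
  induction l as [|a l IH]; simpl; [tauto|]. intros H.
  destruct (Nat.eqb a i) eqn:E.
  - apply Nat.eqb_eq in E; subst; reflexivity.
  - destruct H as [->|H]; [rewrite Nat.eqb_refl in E; discriminate| auto].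
Qed.

Definition z0 (M : structure) : M := ifun M zero_sym [].
Definition recon (M : structure) (fvl : list nat) (d : list M) : nat -> M :=
  fun i => nth (idx i fvl) d (z0 M).
Definition Rel (M : structure) (F : fsym -> list M -> M) (q : bool) (phi : formula) : list M -> M -> Prop :=
  fun d b => sat (mk M F) (scons b (recon M (fvlist (quant q phi)) d)) phi.
Definition Good (L : language) (M : structure) (q : bool) (k : nat) (R : list M -> M -> Prop) (fn : list M -> M) : Prop :=
  definable L (mk M (ifun M)) k fn /\
  forall d, length d = k -> if q then ((exists b, R d b) -> R d (fn d)) else ((exists b, ~ R d b) -> ~ R d (fn d)).
Definition Cf (L : language) (M : structure) (q : bool) (k : nat) (R : list M -> M -> Prop) : list M -> M :=
  match excluded_middle_informative (exists fn, Good L M q k R fn) with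
  | left H => proj1_sig (constructive_indefinite_description _ H)
  | right _ => fun _ => dom_inh M
  end.

Lemma Cf_good L M q k R : (exists fn, Good L M q k R fn) -> Good L M q k R (Cf L M q k R).
Proof.
  intros H; unfold Cf; destruct (excluded_middle_informative _); [|tauto].
  exact (proj2_sig (constructive_indefinite_description _ e)).
Qed.

Fixpoint fint (L : language) (M : structure) (n : nat) (g : fsym) : list M -> M :=
  match n with
  | 0 => ifun M g
  | S n' => match g with
            | Sk q phi => Cf L M q (farity (Sk q phi)) (Rel M (fint L M n') q phi)
            | FBase _ _ => ifun M g
            end
  end.

Lemma fint_base L M n a b : fint L M n (FBase a b) = ifun M (FBase a b).
Proof. destruct n; reflexivity. Qed.

Lemma skn_lpred L n p : lpred (skn n L) p <-> lpred L p.
Proof. destruct n; simpl; tauto. Qed.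

Lemma skn_mono L n m g : n <= m -> lfun (skn n L) g -> lfun (skn m L) g.
Proof. induction 1; auto. intros Hg; simpl; left; auto. Qed.

Lemma wf_skn_mono L n m f : n <= m -> wf_formula (skn n L) f -> wf_formula (skn m L) f.
Proof.
  intros H; apply wf_mono; [intros; eapply skn_mono; eauto|]. intros p; rewrite !skn_lpred; auto.
Qed.

Lemma fint_stable L M : skolem_free L -> forall n g, lfun (skn n L) g -> forall m, n <= m -> fint L M m g = fint L M n g.
Proof.
  intros SF n; induction n; intros g Hg m Hm.
  - destruct (SF g Hg) as (a & b & ->). rewrite !fint_base; reflexivity.
  - destruct Hg as [Hg | (q & phi & -> & Hw)].
    + rewrite (IHn g Hg m) by lia. rewrite (IHn g Hg (S n)) by lia. reflexivity.
    + destruct m as [|m]; [lia|]. simpl. f_equal.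
      unfold Rel. extensionality d; extensionality b. apply propositional_extensionality.
      apply (sat_agree M (skn n L)); auto. intros h Hh; apply IHn; auto; lia.
Qed.

Definition Fp (L : language) (M : structure) (g : fsym) : list M -> M :=
  match excluded_middle_informative (exists n, lfun (skn n L) g) with
  | left H => fint L M (proj1_sig (constructive_indefinite_description _ H)) g
  | right _ => ifun M g
  end.

Lemma Fp_agree L M : skolem_free L -> forall n g, lfun (skn n L) g -> Fp L M g = fint L M n g.
Proof.
  intros SF n g Hg; unfold Fp; destruct (excluded_middle_informative _); [|exfalso; eauto].
  destruct (constructive_indefinite_description _ e) as [n0 H0]; simpl.
  rewrite <- (fint_stable L M SF n0 g H0 (Nat.max n n0)) by lia.
  apply (fint_stable L M SF n g Hg); lia.
Qed.

Lemma Fp_base L M a b : Fp L M (FBase a b) = ifun M (FBase a b).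
Proof. unfold Fp; destruct (excluded_middle_informative _); auto using fint_base. Qed.

Lemma nth_map_seq {D} (rho : nat -> D) k i x : i < k -> nth i (map rho (seq 0 k)) x = rho i.
Proof.
  intros H. rewrite (nth_indep _ x (rho 0)) by (rewrite length_map, length_seq; lia).
  rewrite map_nth, seq_nth by lia. reflexivity.
Qed.

Lemma GoodEx L M F q phi : lfun L zero_sym -> has_definable_skolem_functions L (mk M (ifun M)) ->
  DefR L M (fun rho => sat (mk M F) rho phi) ->
  exists fn, Good L M q (farity (Sk q phi)) (Rel M F q phi) fn.
Proof.
  intros HZ HD [chi [wchi hchi]].
  set (fvl := fvlist (quant q phi)).
  set (k := length fvl).
  change (farity (Sk q phi)) with k.
  set (sg := fun j => match j with 0 => Var 0 | S i => if idx i fvl <? k then Var (S (idx i fvl)) else tzero end).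
  set (psi0 := fsubst sg chi).
  assert (Hw : wf_formula L psi0).
  { apply wf_fsubst; auto. intros [|i]; simpl; auto. destruct (idx i fvl <? k); simpl; auto. }
  assert (Hb : fbound psi0 <= S k).
  { apply fbound_subst. intros [|i]; simpl; [lia|]. destruct (idx i fvl <? k) eqn:E; simpl; [|lia].
    apply Nat.ltb_lt in E; lia. }
  assert (Key : forall d b, length d = k -> (sat (mk M (ifun M)) (env (mk M (ifun M)) (b :: d)) psi0 <-> Rel M F q phi d b)).
  { intros d b Hl. unfold psi0. rewrite sat_subst. unfold Rel. rewrite hchi.
    replace (fun i => teval (mk M (ifun M)) (env (mk M (ifun M)) (b :: d)) (sg i)) with (scons b (recon M fvl d)); [reflexivity|].
    extensionality j; destruct j as [|i]; [reflexivity|]. simpl.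
    unfold recon. destruct (idx i fvl <? k) eqn:E.
    - apply Nat.ltb_lt in E. simpl. unfold env. simpl. apply nth_indep. exact (eq_ind_r (fun x => idx i fvl < x) E Hl).
    - apply Nat.ltb_ge in E. simpl. rewrite nth_overflow; [reflexivity|]. exact (eq_ind_r (fun x => x <= idx i fvl) E Hl). }
  assert (Henv : forall (d : list M) b, scons b (env (mk M (ifun M)) d) = env (mk M (ifun M)) (b :: d)).
  { intros d b; extensionality j; destruct j; reflexivity. }
  destruct q.
  - destruct (HD k psi0 Hw Hb) as [fn [Hdef Hsk]]. exists fn; split; auto.
    intros d Hl [b Hbb]. apply Key; auto. apply Hsk; auto. simpl. exists b. rewrite Henv. apply Key; auto.
  - destruct (HD k (Neg psi0)) as [fn [Hdef Hsk]]; [simpl; auto| simpl; lia|].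
    exists fn; split; auto.
    intros d Hl [b Hbb] Hr. specialize (Hsk d Hl). simpl in Hsk.
    apply Hsk; [|apply Key; auto]. exists b. rewrite Henv. intros Hc; apply Hbb, Key; auto.
Qed.

Lemma level_def L M : skolem_free L -> lfun L zero_sym -> has_definable_skolem_functions L (mk M (ifun M)) ->
  forall n g, lfun (skn n L) g -> SymDef L M (fint L M n) g.
Proof.
  intros SF HZ HD n; induction n; intros g Hg.
  - apply DefR_fun; auto.
  - assert (FD := proj2 (formula_def L M (skn n L) (fint L M n) (fun p => proj1 (skn_lpred L n p)) IHn)).
    destruct Hg as [Hg | (q & phi & -> & Hw)].
    + unfold SymDef. rewrite (fint_stable L M SF n g Hg (S n)) by lia. apply IHn; auto.
    + destruct (Cf_good L M q _ _ (GoodEx L M (fint L M n) q phi HZ HD (FD phi Hw))) as [[psi [wpsi [bpsi hpsi]]] _].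
      set (k := farity (Sk q phi)) in *.
      unfold SymDef. fold k. simpl fint.
      set (fn := Cf L M q k (Rel M (fint L M n) q phi)) in *.
      assert (D0 : DefR L M (fun rho => sat (mk M (ifun M)) rho psi)) by (exists psi; split; auto; tauto).
      apply (DefR_ren L M _ (fun j => match j with 0 => k | S i => i end)) in D0.
      revert D0; apply DefR_ext; intros rho.
      rewrite (sat_coinc_bound _ psi _ (env (mk M (ifun M)) (rho k :: map rho (seq 0 k)))).
      * rewrite <- hpsi by (rewrite length_map, length_seq; reflexivity). split; auto.
      * intros [|i] Hi; [reflexivity|]. unfold env; simpl. rewrite nth_map_seq by lia. reflexivity.
Qed.

Lemma wf_term_skw L t : wf_term (skw L) t -> exists n, wf_term (skn n L) t.
Proof.
  induction t using term_ind'.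
  - exists 0; simpl; auto.
  - rewrite wf_app; intros ((n0 & Hg) & H2 & H3).
    assert (HN : exists N, Forall (wf_term (skn N L)) ts).
    { clear H2; induction H; [exists 0; constructor|]. inversion H3 as [|? ? H5 H6]; subst.
      destruct (H H5) as [a Ha]. destruct (IHForall H6) as [b Hb]. exists (Nat.max a b). constructor.
      - eapply wf_term_mono; [|exact Ha]. intros; eapply skn_mono; [|eauto]; lia.
      - eapply Forall_impl; [|exact Hb]. apply wf_term_mono. intros; eapply skn_mono; [|eauto]; lia. }
    destruct HN as [N HN]. exists (Nat.max n0 N). apply wf_app. repeat split; auto.
    + eapply skn_mono; [|eauto]; lia.
    + eapply Forall_impl; [|exact HN]. apply wf_term_mono. intros; eapply skn_mono; [|eauto]; lia.
Qed.

Lemma wf_skw L f : wf_formula (skw L) f -> exists n, wf_formula (skn n L) f.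
Proof.
  assert (TM : forall n m t, n <= m -> wf_term (skn n L) t -> wf_term (skn m L) t).
  { intros n m t Hnm; apply wf_term_mono; intros; eapply skn_mono; eauto. }
  induction f; simpl; intros Hw.
  - exists 0; simpl; auto.
  - destruct Hw as [w1 w2]. destruct (wf_term_skw L t w1) as [a Ha]. destruct (wf_term_skw L t0 w2) as [b Hb].
    exists (Nat.max a b); simpl; split; [apply (TM a)|apply (TM b)]; auto; lia.
  - destruct Hw as (Hp & Hl & Hf).
    assert (HN : exists N, Forall (wf_term (skn N L)) l).
    { clear Hl; induction Hf; [exists 0; constructor|].
      destruct (wf_term_skw L x H) as [a Ha]. destruct IHHf as [b Hb]. exists (Nat.max a b). constructor.
      - eapply TM; [|exact Ha]; lia.
      - eapply Forall_impl; [|exact Hb]. intros; eapply TM; [|eauto]; lia. }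
    destruct HN as [N HN]. exists N. simpl. rewrite skn_lpred. auto.
  - destruct Hw as [w1 w2]. destruct (IHf1 w1) as [a Ha]; destruct (IHf2 w2) as [b Hb].
    exists (Nat.max a b); simpl; split; [apply (wf_skn_mono L a)|apply (wf_skn_mono L b)]; auto; lia.
  - destruct Hw as [w1 w2]. destruct (IHf1 w1) as [a Ha]; destruct (IHf2 w2) as [b Hb].
    exists (Nat.max a b); simpl; split; [apply (wf_skn_mono L a)|apply (wf_skn_mono L b)]; auto; lia.
  - destruct Hw as [w1 w2]. destruct (IHf1 w1) as [a Ha]; destruct (IHf2 w2) as [b Hb].
    exists (Nat.max a b); simpl; split; [apply (wf_skn_mono L a)|apply (wf_skn_mono L b)]; auto; lia.
  - destruct (IHf Hw) as [a Ha]; exists a; exact Ha.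
  - destruct (IHf Hw) as [a Ha]; exists a; exact Ha.
Qed.

Lemma Rel_char M F q phi rho v :
  sat (mk M F) (scons v rho) phi <-> Rel M F q phi (map rho (fvlist (quant q phi))) v.
Proof.
  unfold Rel. apply sat_coinc. intros [|i] Hi; [reflexivity|]. simpl. unfold recon.
  symmetry; apply nth_idx_map. unfold fvlist. apply filter_In.
  assert (Hq : ffree i (quant q phi) = true) by (destruct q; exact Hi).
  split; auto. apply in_seq. split; [lia|]. simpl. apply ffree_lt; auto.
Qed.

Definition Ind_body phi := Imp (And (fsubst (inst0 tzero) phi)
                   (All (Imp phi (fsubst (fun n => match n with
                                                   | 0 => tsucc (Var 0)
                                                   | S m => Var (S m) end) phi))))
              (All phi).

Lemma Ind_sem St phi rho : sat St rho (Ind_body phi) <->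
  ((sat St (scons (ifun St zero_sym []) rho) phi /\
    forall d, sat St (scons d rho) phi -> sat St (scons (ifun St succ_sym [d]) rho) phi) ->
   forall d, sat St (scons d rho) phi).
Proof.
  unfold Ind_body; simpl. rewrite sat_subst.
  replace (fun i => teval St rho (inst0 tzero i)) with (scons (ifun St zero_sym []) rho)
    by (extensionality i; destruct i; reflexivity).
  assert (A : forall d, sat St (scons d rho) (fsubst (fun n => match n with
                                                   | 0 => tsucc (Var 0)
                                                   | S m => Var (S m) end) phi) <->
              sat St (scons (ifun St succ_sym [d]) rho) phi).
  { intros d; rewrite sat_subst. apply sat_coinc. intros [|i] _; reflexivity. }
  split.
  - intros H [H1 H2]; apply H; split; auto. intros d Hd; apply A; auto.
  - intros H [H1 H2]; apply H; split; auto. intros d Hd; apply A; auto.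
Qed.

Theorem proposition8 (L : language) (T : formula -> Prop) :
  skolem_free L ->
  lfun L zero_sym -> lfun L succ_sym ->
  theory_over L T ->
  (forall M : structure,
      model_of M (theory_union T (IND L)) ->
      has_definable_skolem_functions L M) ->
  equiv_on L
    (theory_union (SA L) (theory_union T (IND (skw L))))
    (theory_union T (IND L)).
Proof.
  intros SF HZ HS HT HD f Hf. split.
  - intros Hprov M0 HM. destruct M0 as [D inh I P].
    set (N := Struct D inh I P) in *.
    assert (HDN : has_definable_skolem_functions L (mk N (ifun N))) by exact (HD N HM).
    set (M' := mk N (Fp L N)).
    assert (AgL : forall g, lfun L g -> ifun N g = Fp L N g).
    { intros g Hg. destruct (SF g Hg) as (a & b & ->). rewrite Fp_base; reflexivity. }
    assert (AgN : forall n phi, wf_formula (skn n L) phi -> forall rho,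
               sat M' rho phi <-> sat (mk N (fint L N n)) rho phi).
    { intros n phi Hw rho. apply (sat_agree N (skn n L)); auto. intros g Hg; apply Fp_agree; auto. }
    assert (LF : forall n phi, wf_formula (skn n L) phi -> DefR L N (fun rho => sat (mk N (fint L N n)) rho phi)).
    { intros n. apply (proj2 (formula_def L N (skn n L) (fint L N n) (fun p => proj1 (skn_lpred L n p))
                               (level_def L N SF HZ HDN n))). }
    assert (HM' : model_of M' (theory_union (SA L) (theory_union T (IND (skw L))))).
    { intros g [Hg | [Hg | Hg]].
      - destruct Hg as (phi & Hw & Hg). destruct (wf_skw L phi Hw) as [n Hn].
        assert (Hsk : forall q, Fp L N (Sk q phi) = Cf L N q (farity (Sk q phi)) (Rel N (fint L N n) q phi)).
        { intros q. rewrite (Fp_agree L N SF (S n)); [reflexivity|]. right; eauto. }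
        assert (HG : forall q, Good L N q (farity (Sk q phi)) (Rel N (fint L N n) q phi)
                                 (Cf L N q (farity (Sk q phi)) (Rel N (fint L N n) q phi))).
        { intros q. apply Cf_good, GoodEx; auto. }
        assert (RC : forall q rho v, sat M' (scons v rho) phi <->
                       Rel N (fint L N n) q phi (map rho (fvlist (quant q phi))) v).
        { intros q rho v. rewrite (AgN n phi Hn). apply Rel_char. }
        assert (TE : forall q rho, (fun i => teval M' rho (inst0 (skterm q phi) i)) =
                       scons (Cf L N q (farity (Sk q phi)) (Rel N (fint L N n) q phi) (map rho (fvlist (quant q phi)))) rho).
        { intros q rho; extensionality i; destruct i; [|reflexivity]. simpl.
          change (Fp L N (Sk q phi) (map (teval M' rho) (map Var (fvlist (quant q phi)))) =
                  Cf L N q (farity (Sk q phi)) (Rel N (fint L N n) q phi) (map rho (fvlist (quant q phi)))).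
          rewrite Hsk, map_map. reflexivity. }
        destruct Hg as [-> | ->]; apply uclose_valid; intros rho; simpl.
        + intros [d Hd]. rewrite sat_subst, TE. apply (RC true).
          destruct (HG true) as [_ HG2]. apply (HG2 _ (length_map _ _)).
          exists d. apply (RC true). exact Hd.
        + rewrite sat_subst, TE. intros H d. apply NNPP; intros Hn'.
          destruct (HG false) as [_ HG2]. apply (HG2 (map rho (fvlist (quant false phi))) (length_map _ _)).
          * exists d. intros Hc. apply Hn'. apply (RC false). exact Hc.
          * apply (RC false). exact H.
      - intros rho. destruct (HT g Hg) as [Hw _].
        apply (sat_agree N L (ifun N) (Fp L N) AgL g Hw). apply (HM g); left; auto.
      - destruct Hg as (phi & Hw & ->). destruct (wf_skw L phi Hw) as [n Hn].
        destruct (LF n phi Hn) as [chi [wchi hchi]].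
        assert (E : forall e, sat M' e phi <-> sat N e chi).
        { intros e. rewrite (AgN n phi Hn). apply hchi. }
        assert (HI : valid_in N (Ind chi)) by (apply HM; right; exists chi; auto).
        change (valid_in M' (uclose (Ind_body phi))). apply uclose_valid. intros rho.
        change (valid_in N (uclose (Ind_body chi))) in HI. apply (proj1 (uclose_valid _ _)) in HI. specialize (HI rho).
        pose proof (proj1 (Ind_sem _ _ _) HI) as HI2. clear HI. apply (proj2 (Ind_sem _ _ _)).
        assert (Z : ifun M' zero_sym [] = ifun N zero_sym []) by (change (Fp L N zero_sym [] = I zero_sym []); unfold zero_sym; rewrite Fp_base; reflexivity).
        assert (Sc : forall d, ifun M' succ_sym [d] = ifun N succ_sym [d]) by (intros d; change (Fp L N succ_sym [d] = I succ_sym [d]); unfold succ_sym; rewrite Fp_base; reflexivity).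
        intros [H1 H2] d. apply E. apply HI2. split.
        + apply E. rewrite <- Z. exact H1.
        + intros d' Hd'. apply E. rewrite <- Sc. apply H2. apply E. exact Hd'. }
    intros rho. specialize (Hprov M' HM' rho).
    apply (sat_agree N L (ifun N) (Fp L N) AgL f Hf). exact Hprov.
  - intros Hprov M HM. apply Hprov. intros g [Hg | Hg].
    + apply HM; right; left; auto.
    + apply HM; right; right. destruct Hg as (phi & Hw & ->). exists phi; split; auto.
      apply (wf_mono L); auto. intros g Hg; exists 0; exact Hg.
Qed.
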